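(* Let a lattice $\Lambda\subset\mathbb R^3$ have Voronoi type $V_5$, i.e. its Voronoi domain is a cuboid, so $\Lambda$ is generated by pairwise orthogonal vectors $v_1,v_2,v_3$. Then any obtuse superbase of $\Lambda$ belongs to one of the following four isometry classes of obtuse superbases (superbases within one class are isometric to each other): (o) one class of 8 odd superbases $\{\pm v_1,\pm v_2,\pm v_3,\,v_0\}$ for any choice of signs, where $v_0$ is minus the sum of the three chosen vectors; the coform of any of them can be written, up to the 24 index-permutations, as $\begin{pmatrix}0&0&0\\ |v_1|^2&|v_2|^2&|v_3|^2\end{pmatrix}$; (e) three classes, each of 8 even superbases $\{v_i,\,v_j,\,v_k-v_i,\,-v_k-v_j\}$, where $v_i,v_j,v_k\in\{\pm v_1,\pm v_2,\pm v_3\}$ are pairwise orthogonal with distinct indices $i,j,k\in\{1,2,3\}$; the coform of any of them can be written, up to the 24 index-permutations, as $\begin{pmatrix}0&0&|v_i|^2\\ 0&|v_k|^2&|v_j|^2\end{pmatrix}$, where $k\in\{1,2,3\}$ determines the class and $i,j$ can be swapped.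
   Context: A lattice $\Lambda\subset\mathbb R^3$ is the set of integer combinations of a basis. A superbase is $(u_0,u_1,u_2,u_3)$ with $u_1,u_2,u_3$ a basis of $\Lambda$ and $u_0=-u_1-u_2-u_3$; conorms $p_{ij}=-u_i\cdot u_j$ ($i\ne j$, $p_{ij}=p_{ji}$); obtuse if all $p_{ij}\ge0$. The coform is the matrix $\begin{pmatrix}p_{23}&p_{13}&p_{12}\\ p_{01}&p_{02}&p_{03}\end{pmatrix}$. An index-permutation $\sigma\in S_4$ maps $p_{ij}\mapsto p_{\sigma(i)\sigma(j)}$. Two superbases are isometric if an isometry of $\mathbb R^3$ fixing the origin maps one onto the other as sets of vectors. The Voronoi domain is $V(\Lambda)=\{p: |p|\le|p-v|\ \forall v\in\Lambda\}$. *)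

(* Defs.v *)
From HB Require Import structures.
From mathcomp Require Import all_boot all_order all_algebra all_fingroup.
From mathcomp Require Import reals.
Set Implicit Arguments. Unset Strict Implicit. Unset Printing Implicit Defensive.
Import Order.TTheory GRing.Theory Num.Theory.
Local Open Scope ring_scope.

Section Defs.
Variable R : realType.
Notation vec := 'rV[R]_3.

Definition dot (x y : vec) : R := \sum_(l < 3) x 0 l * y 0 l.
Definition norm2 (x : vec) : R := dot x x.

Definition in_lattice (b : 'I_3 -> vec) (x : vec) : Prop :=
  exists z : 'I_3 -> int, x = \sum_(l < 3) (b l *~ z l).

Definition lin_indep (b : 'I_3 -> vec) : Prop :=
  forall c : 'I_3 -> R, \sum_(l < 3) c l *: b l = 0 -> forall l, c l = 0.

Definition lattice_basis (v b : 'I_3 -> vec) : Prop :=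
  lin_indep b /\ (forall x, in_lattice b x <-> in_lattice v x).

Definition superbase_of (v : 'I_3 -> vec) (u : 'I_4 -> vec) : Prop :=
  lattice_basis v (fun l : 'I_3 => u (lift ord0 l)) /\
  u ord0 = - (u (inord 1) + u (inord 2) + u (inord 3)).

Definition conorm (u : 'I_4 -> vec) (i j : 'I_4) : R := - dot (u i) (u j).

Definition obtuse (u : 'I_4 -> vec) : Prop :=
  forall i j : 'I_4, i != j -> 0 <= conorm u i j.

(* the coform  ( p23 p13 p12 ; p01 p02 p03 ) of a conorm function p *)
Definition coform (p : 'I_4 -> 'I_4 -> R) : 'M[R]_(2, 3) :=
  \matrix_(r < 2, c < 3)
    if r == 0 :> nat then
      (if c == 0 :> nat then p (inord 2) (inord 3)
       else if c == 1 :> nat then p (inord 1) (inord 3)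
       else p (inord 1) (inord 2))
    else p ord0 (lift ord0 c).

Definition perm_conorm (s : 'S_4) (p : 'I_4 -> 'I_4 -> R) : 'I_4 -> 'I_4 -> R :=
  fun i j => p (s i) (s j).

Definition same_set (u w : 'I_4 -> vec) : Prop :=
  forall x, (exists i, x = u i) <-> (exists i, x = w i).

Definition isometry0 (f : vec -> vec) : Prop :=
  f 0 = 0 /\ forall x y, norm2 (f x - f y) = norm2 (x - y).

Definition isometric (u w : 'I_4 -> vec) : Prop :=
  exists f, isometry0 f /\ same_set (fun i => f (u i)) w.

Definition sv (v : 'I_3 -> vec) (s : 'I_3 -> bool) (l : 'I_3) : vec :=
  if s l then - v l else v l.

Definition odd_sb (v : 'I_3 -> vec) (s : 'I_3 -> bool) : 'I_4 -> vec :=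
  fun i => match unlift ord0 i with
           | Some l => sv v s l
           | None => - (sv v s 0 + sv v s 1 + sv v s 2)
           end.

Definition even_sb (v : 'I_3 -> vec) (k i j : 'I_3) (s : 'I_3 -> bool) : 'I_4 -> vec :=
  fun n => if n == 0 :> nat then - sv v s k - sv v s j
           else if n == 1 :> nat then sv v s i
           else if n == 2 :> nat then sv v s j
           else sv v s k - sv v s i.

Definition distinct3 (k i j : 'I_3) : Prop := [/\ i != j, i != k & j != k].

Definition odd_coform (v : 'I_3 -> vec) : 'M[R]_(2, 3) :=
  \matrix_(r < 2, c < 3) if r == 0 :> nat then 0 else norm2 (v c).

Definition even_coform (v : 'I_3 -> vec) (k i j : 'I_3) : 'M[R]_(2, 3) :=
  \matrix_(r < 2, c < 3)
    if r == 0 :> nat then (if c == 2 :> nat then norm2 (v i) else 0)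
    else (if c == 0 :> nat then 0 else if c == 1 :> nat then norm2 (v k)
          else norm2 (v j)).

End Defs.

(* Main.v *)
Require Import Defs.
From HB Require Import structures.
From mathcomp Require Import all_boot all_order all_algebra all_fingroup.
From mathcomp Require Import reals.
From mathcomp Require Import ring lra zify.
From Stdlib Require Import FunctionalExtensionality.
Set Implicit Arguments. Unset Strict Implicit. Unset Printing Implicit Defensive.
Import Order.TTheory GRing.Theory Num.Theory.
Local Open Scope ring_scope.

Definition L : seq int := [:: -1; 0; 1].
Definition colT := (int * int * int * int)%type.
Definition cget (c : colT) (n : nat) : int :=
  match n with 0%N => c.1.1.1 | 1%N => c.1.1.2 | 2%N => c.1.2 | _ => c.2 end.
Definition forallcol (P : colT -> bool) :=
  all (fun a0 => all (fun a1 => all (fun a2 => all (fun a3 => P (a0,a1,a2,a3)) L) L) L) L.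
Definition B01 : seq int := [:: 0; 1].
Definition validcol (c : colT) :=
  (c.1.1.1 + c.1.1.2 + c.1.2 + c.2 == 0) &&
  all (fun t0 => all (fun t1 => all (fun t2 => all (fun t3 =>
    let x := t0 * c.1.1.1 + t1 * c.1.1.2 + t2 * c.1.2 + t3 * c.2 in
    (-1 <= x) && (x <= 1)) B01) B01) B01) B01.
Definition I4 := iota 0 4.
Definition I3 := iota 0 3.
Definition nondeg (c0 c1 c2 : colT) :=
  all (fun l0 => all (fun l1 => all (fun l2 =>
    ((l0 != 0) || (l1 != 0) || (l2 != 0)) ==>
    has (fun n => l0 * cget c0 n + l1 * cget c1 n + l2 * cget c2 n != 0) I4) L) L) L.
Definition zrow (c0 c1 c2 : colT) (n m : nat) : int :=
  cget (match m with 0%N => c0 | 1%N => c1 | _ => c2 end) n.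
Definition sgn (b : bool) : int := if b then -1 else 1.
Definition sfn (t : bool * bool * bool) (l : nat) : bool :=
  match l with 0%N => t.1.1 | 1%N => t.1.2 | _ => t.2 end.
Definition svc (s : nat -> bool) (x m : nat) : int := if x == m then sgn (s x) else 0.
Definition oddrow (s : nat -> bool) (n m : nat) : int :=
  if n == 0%N then - (svc s 0 m + svc s 1 m + svc s 2 m) else svc s n.-1 m.
Definition evenrow (k i j : nat) (s : nat -> bool) (n m : nat) : int :=
  if n == 0%N then - svc s k m - svc s j m
  else if n == 1%N then svc s i m
  else if n == 2%N then svc s j m
  else svc s k m - svc s i m.
Definition samerows (A B : nat -> nat -> int) :=
  all (fun n => has (fun n' => all (fun m => A n m == B n' m) I3) I4) I4 &&
  all (fun n => has (fun n' => all (fun m => B n m == A n' m) I3) I4) I4.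
Definition T8 : seq (bool * bool * bool) :=
  [:: (false,false,false); (false,false,true); (false,true,false); (false,true,true);
      (true,false,false); (true,false,true); (true,true,false); (true,true,true)].
Definition P6 : seq (nat * nat * nat) :=
  [:: (0,1,2); (0,2,1); (1,0,2); (1,2,0); (2,0,1); (2,1,0)]%N.
Definition witness c0 c1 c2 :=
  has (fun t => samerows (zrow c0 c1 c2) (oddrow (sfn t))) T8 ||
  has (fun p => has (fun t => samerows (zrow c0 c1 c2) (evenrow p.1.1 p.1.2 p.2 (sfn t))) T8) P6.
Definition VC := filter validcol (flatten (flatten (flatten [seq [seq [seq [seq (a0,a1,a2,a3) | a3 <- L] | a2 <- L] | a1 <- L] | a0 <- L]))).
Definition checkVC := forallcol (fun c => validcol c ==> (c \in VC)).
Lemma checkVC_ok : checkVC. Proof. vm_compute. reflexivity. Qed.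
Definition check := all (fun c0 => all (fun c1 => all (fun c2 => nondeg c0 c1 c2 ==> witness c0 c1 c2) VC) VC) VC.
Lemma check_ok : check. Proof. vm_compute. reflexivity. Qed.
Definition odd_dist_check :=
  all (fun t => all (fun t' => all (fun a => all (fun b =>
    all (fun m => oddrow (sfn t) a m == oddrow (sfn t') b m) I3 ==> (sfn t a.-1 == sfn t' a.-1))
  I4) [:: 1; 2; 3]%N) T8) T8.
Lemma odd_dist_check_ok : odd_dist_check. Proof. vm_compute. reflexivity. Qed.
Definition eidx (p : nat * nat * nat) (a : nat) :=
  if a == 1%N then p.1.2 else if a == 2%N then p.2 else p.1.1.
Definition even_dist_check :=
  all (fun p => all (fun t => all (fun t' => all (fun a => all (fun b =>
    all (fun m => evenrow p.1.1 p.1.2 p.2 (sfn t) a m == evenrow p.1.1 p.1.2 p.2 (sfn t') b m) I3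
    ==> (sfn t (eidx p a) == sfn t' (eidx p a)))
  I4) [:: 1; 2; 3]%N) T8) T8) P6.
Lemma even_dist_check_ok : even_dist_check. Proof. vm_compute. reflexivity. Qed.


Section Basic.
Variable R : realType.
Implicit Types x y z : 'rV[R]_3.

Lemma dotC x y : dot x y = dot y x.
Proof. by apply: eq_bigr => l _; rewrite mulrC. Qed.
Lemma dotDl x y z : dot (x + y) z = dot x z + dot y z.
Proof. by rewrite /dot -big_split; apply: eq_bigr => l _; rewrite mxE mulrDl. Qed.
Lemma dotZl a x y : dot (a *: x) y = a * dot x y.
Proof. by rewrite /dot mulr_sumr; apply: eq_bigr => l _; rewrite mxE mulrA. Qed.
Lemma dotNl x y : dot (- x) y = - dot x y.
Proof. by rewrite -scaleN1r dotZl mulN1r. Qed.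
Lemma dotBl x y z : dot (x - y) z = dot x z - dot y z.
Proof. by rewrite dotDl dotNl. Qed.
Lemma dot0l y : dot 0 y = 0.
Proof. by rewrite /dot big1 // => l _; rewrite mxE mul0r. Qed.
Lemma dotMzl x n y : dot (x *~ n) y = n%:~R * dot x y.
Proof. by rewrite -scaler_int dotZl. Qed.
Lemma dotDr x y z : dot x (y + z) = dot x y + dot x z.
Proof. by rewrite dotC dotDl !(dotC x). Qed.
Lemma dotZr a x y : dot x (a *: y) = a * dot x y.
Proof. by rewrite dotC dotZl dotC. Qed.
Lemma dotNr x y : dot x (- y) = - dot x y.
Proof. by rewrite dotC dotNl dotC. Qed.
Lemma dotBr x y z : dot x (y - z) = dot x y - dot x z.
Proof. by rewrite dotDr dotNr. Qed.
Lemma dotMzr x n y : dot x (y *~ n) = n%:~R * dot x y.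
Proof. by rewrite dotC dotMzl dotC. Qed.
Lemma dot_suml (I : Type) (r : seq I) (F : I -> 'rV[R]_3) y :
  dot (\sum_(i <- r) F i) y = \sum_(i <- r) dot (F i) y.
Proof.
by apply: (big_morph (fun x => dot x y)); [move=> a b; rewrite dotDl | rewrite dot0l].
Qed.
Lemma dot_sumr (I : Type) (r : seq I) (F : I -> 'rV[R]_3) y :
  dot y (\sum_(i <- r) F i) = \sum_(i <- r) dot y (F i).
Proof. by rewrite dotC dot_suml; apply: eq_bigr => i _; rewrite dotC. Qed.
Lemma norm2_ge0 x : 0 <= norm2 x.
Proof. by apply: sumr_ge0 => l _; rewrite -expr2 sqr_ge0. Qed.
Lemma norm2_gt0 x : x != 0 -> 0 < norm2 x.
Proof.
move=> hx; rewrite lt_def norm2_ge0 andbT; apply: contra hx => /eqP h.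
move/eqP: h; rewrite /norm2 /dot psumr_eq0 => [/allP H|l _]; last by rewrite -expr2 sqr_ge0.
apply/eqP/rowP => l; rewrite mxE; have := H l (mem_index_enum l).
by rewrite implyTb -expr2 sqrf_eq0 => /eqP.
Qed.

Lemma sum3 (V : zmodType) (F : 'I_3 -> V) :
  \sum_(i < 3) F i = F ord0 + F (inord 1) + F (inord 2).
Proof.
rewrite !big_ord_recl big_ord0 addr0 addrA; congr (_ + F _ + F _); apply: val_inj => //=;
  by rewrite inordK.
Qed.

End Basic.


Section Lat.
Variable R : realType.
Implicit Types b a : 'I_3 -> 'rV[R]_3.

Lemma lat0 b : in_lattice b 0.
Proof. by exists (fun _ => 0); rewrite big1. Qed.
Lemma latD b x y : in_lattice b x -> in_lattice b y -> in_lattice b (x + y).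
Proof.
move=> [z ->] [z' ->]; exists (fun l => z l + z' l).
by rewrite -big_split; apply: eq_bigr => l _; rewrite mulrzDr.
Qed.
Lemma latMz b x n : in_lattice b x -> in_lattice b (x *~ n).
Proof.
move=> [z ->]; exists (fun l => z l * n).
by rewrite mulrz_suml; apply: eq_bigr => l _; rewrite mulrzA.
Qed.
Lemma latN b x : in_lattice b x -> in_lattice b (- x).
Proof. by move=> h; rewrite -mulrN1z; apply: latMz. Qed.
Lemma latB b x y : in_lattice b x -> in_lattice b y -> in_lattice b (x - y).
Proof. by move=> h1 h2; apply: latD => //; apply: latN. Qed.
Lemma latgen b l : in_lattice b (b l).
Proof.
exists (fun m => (m == l)%:Z); rewrite (bigD1 l) //= eqxx mulr1z big1 ?addr0 //.
by move=> m /negbTE ->; rewrite mulr0z.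
Qed.
Lemma lat_sub a b : (forall l, in_lattice a (b l)) ->
  forall x, in_lattice b x -> in_lattice a x.
Proof.
move=> hab x [z ->]; apply: (big_ind (in_lattice a)).
- exact: lat0.
- by move=> ? ? ; apply: latD.
- by move=> l _; apply: latMz.
Qed.
Lemma lat_eq a b : (forall l, in_lattice a (b l)) -> (forall l, in_lattice b (a l)) ->
  forall x, in_lattice b x <-> in_lattice a x.
Proof. by move=> h1 h2 x; split; apply: lat_sub. Qed.
End Lat.

Section V.
Variable R : realType.
Variable v : 'I_3 -> 'rV[R]_3.
Hypothesis hv0 : forall l, v l != 0.
Hypothesis horth : forall l m, l != m -> dot (v l) (v m) = 0.

Definition vof (r : 'I_3 -> int) := \sum_m v m *~ r m.

Lemma w_gt0 m : 0 < norm2 (v m). Proof. exact: norm2_gt0. Qed.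
Lemma w_neq0 m : norm2 (v m) != 0. Proof. by rewrite gt_eqF // w_gt0. Qed.

Lemma dot_vof_v r m : dot (vof r) (v m) = (r m)%:~R * norm2 (v m).
Proof.
rewrite /vof dot_suml (bigD1 m) //= big1 ?addr0; first by rewrite dotMzl.
by move=> l hl; rewrite dotMzl horth ?mulr0.
Qed.

Lemma vof_inj r r' : vof r = vof r' -> forall m, r m = r' m.
Proof.
move=> e m; have := dot_vof_v r m; rewrite e dot_vof_v => /(mulIf (w_neq0 m)) /eqP.
by rewrite eqr_int => /eqP.
Qed.

Lemma sv_mulz s x : sv v s x = v x *~ sgn (s x).
Proof. by rewrite /sv /sgn; case: (s x); rewrite ?mulrN1z ?mulr1z. Qed.

Lemma sgn2 b : (sgn b)%:~R * (sgn b)%:~R = 1 :> R.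
Proof. by case: b; rewrite /= ?mulr1 // mulrNz mulNr mulr1z mulrN mulr1 opprK. Qed.

Lemma dot_sv_v s x m :
  dot (sv v s x) (v m) = if x == m then (sgn (s x))%:~R * norm2 (v m) else 0.
Proof.
rewrite sv_mulz dotMzl; case: eqP => [->//|/eqP h]; by rewrite horth ?mulr0.
Qed.

Lemma dot_sv s x y : dot (sv v s x) (sv v s y) = if x == y then norm2 (v x) else 0.
Proof.
rewrite !sv_mulz dotMzl dotMzr; case: eqP => [->|/eqP h].
  by rewrite mulrA mulrC sgn2 mulr1.
by rewrite horth ?mulr0.
Qed.

Lemma dot_v_v x y : dot (v x) (v y) = if x == y then norm2 (v x) else 0.
Proof. by case: eqP => [->//|/eqP h]; rewrite horth. Qed.

Lemma lat_v_sv s l : in_lattice v (sv v s l).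
Proof. by rewrite sv_mulz; apply/latMz/latgen. Qed.
Lemma v_sv s l : v l = sv v s l *~ sgn (s l).
Proof. by rewrite sv_mulz -mulrzA; case: (s l); rewrite /= ?mulr1z // mulrNz mulr1z mulrN1z opprK. Qed.

Definition vofn (r : nat -> int) := vof (fun m : 'I_3 => r (val m)).

Lemma vofn_inj r r' : vofn r = vofn r' -> forall m, (m < 3)%N -> r m = r' m.
Proof. by move=> /vof_inj h m hm; have := h (Ordinal hm). Qed.

Lemma vofn_ext r r' : (forall m, (m < 3)%N -> r m = r' m) -> vofn r = vofn r'.
Proof. by move=> h; rewrite /vofn /vof; apply: eq_bigr => m _; rewrite h // ltn_ord. Qed.

Lemma vofnD r r' : vofn (fun m => r m + r' m) = vofn r + vofn r'.
Proof. by rewrite /vofn /vof -big_split; apply: eq_bigr => m _; rewrite mulrzDr. Qed.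
Lemma vofnN r : vofn (fun m => - r m) = - vofn r.
Proof. by rewrite /vofn /vof -sumrN; apply: eq_bigr => m _; rewrite mulrNz. Qed.
Lemma vofnB r r' : vofn (fun m => r m - r' m) = vofn r - vofn r'.
Proof. by rewrite vofnD vofnN. Qed.

Lemma sv_vofn (s : 'I_3 -> bool) (sn : nat -> bool) (hs : forall x : 'I_3, sn (val x) = s x) l :
  sv v s l = vofn (svc sn (val l)).
Proof.
rewrite sv_mulz /vofn /vof (bigD1 l) //= big1 ?addr0.
  by rewrite /svc eqxx hs.
by move=> m hm; rewrite /svc val_eqE eq_sym (negbTE hm) mulr0z.
Qed.

Lemma odd_vofn s sn (hs : forall x : 'I_3, sn (val x) = s x) n :
  odd_sb v s n = vofn (oddrow sn (val n)).
Proof.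
rewrite /odd_sb /oddrow; case: (unliftP ord0 n) => [l|] ->.
  by rewrite ?liftK /= ?add0n (sv_vofn hs).
rewrite ?unlift_none /= vofnN !vofnD !(sv_vofn hs) //.
Qed.

Lemma even_vofn k i j s sn (hs : forall x : 'I_3, sn (val x) = s x) n :
  even_sb v k i j s n = vofn (evenrow (val k) (val i) (val j) sn (val n)).
Proof.
rewrite /even_sb /evenrow; case: ifP => _; first by rewrite vofnB vofnN !(sv_vofn hs).
case: ifP => _; first by rewrite !(sv_vofn hs).
case: ifP => _; first by rewrite !(sv_vofn hs).
by rewrite vofnB !(sv_vofn hs).
Qed.

End V.


Section P2.
Variable R : realType.
Variable v : 'I_3 -> 'rV[R]_3.
Hypothesis hv0 : forall l, v l != 0.
Hypothesis horth : forall l m, l != m -> dot (v l) (v m) = 0.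

Lemma I4_1 : (inord 1 : 'I_4) = lift ord0 (0 : 'I_3). Proof. by apply: val_inj; rewrite /= inordK. Qed.
Lemma I4_2 : (inord 2 : 'I_4) = lift ord0 (1 : 'I_3). Proof. by apply: val_inj; rewrite /= inordK. Qed.
Lemma I4_3 : (inord 3 : 'I_4) = lift ord0 (2 : 'I_3). Proof. by apply: val_inj; rewrite /= inordK. Qed.

Lemma odd_lift s l : odd_sb v s (lift ord0 l) = sv v s l.
Proof. by rewrite /odd_sb liftK. Qed.
Lemma odd_0 s : odd_sb v s ord0 = - (sv v s 0 + sv v s 1 + sv v s 2).
Proof. by rewrite /odd_sb unlift_none. Qed.

Lemma odd_superbase s : superbase_of v (odd_sb v s).
Proof.
split; last by rewrite I4_1 I4_2 I4_3 !odd_lift odd_0.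
split.
  move=> c hc l; have := congr1 (fun x => dot x (v l)) hc.
  rewrite /= dot0l dot_suml (bigD1 l) //= big1 ?addr0; last first.
    by move=> m /negbTE hm; rewrite dotZl odd_lift dot_sv_v // hm mulr0.
  rewrite dotZl odd_lift dot_sv_v // eqxx => /eqP.
  rewrite !mulf_eq0 (negbTE (w_neq0 hv0 l)) orbF intr_eq0 => /orP [/eqP //|]; by case: (s l).
apply: lat_eq => l; first by rewrite odd_lift; exact: lat_v_sv.
rewrite (v_sv v s l) -odd_lift; apply: latMz.
exact: (latgen (fun l => odd_sb v s (lift ord0 l)) l).
Qed.

Lemma conorm_odd_ge0 s x y : x != y -> 0 <= - dot (sv v s x) (sv v s y).
Proof. by move=> h; rewrite dot_sv // (negbTE h) oppr0. Qed.

Lemma odd_obtuse s : obtuse (odd_sb v s).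
Proof.
move=> i j hij; rewrite /conorm.
case: (unliftP ord0 i) => [i'|] ei; case: (unliftP ord0 j) => [j'|] ej; subst.
- rewrite !odd_lift; apply: conorm_odd_ge0.
  by apply: contra hij => /eqP ->.
- rewrite odd_lift odd_0 dotNr opprK !dotDr !dot_sv //.
  by rewrite !addr_ge0 //; case: ifP => _; rewrite ?norm2_ge0.
- rewrite odd_lift odd_0 dotNl opprK !dotDl !dot_sv //.
  by rewrite !addr_ge0 //; case: ifP => _; rewrite ?norm2_ge0.
- by rewrite eqxx in hij.
Qed.

Lemma cover3 (k i j : 'I_3) : distinct3 k i j -> forall m : 'I_3, [|| m == k, m == i | m == j].
Proof.
case=> h1 h2 h3 m.
move: k i j m h1 h2 h3.
by do 4! case=> [[|[|[|//]]] ?].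
Qed.

Lemma even_lift k i j s l : even_sb v k i j s (lift ord0 l) =
  if val l == 0%N then sv v s i else if val l == 1%N then sv v s j else sv v s k - sv v s i.
Proof. by []. Qed.

Lemma even_superbase k i j s : distinct3 k i j -> superbase_of v (even_sb v k i j s).
Proof.
move=> hd; have [hij hik hjk] := hd.
split; last first.
  rewrite I4_1 I4_2 I4_3 !even_lift /=.
  by apply/rowP => c; rewrite !mxE; ring.
split.
  move=> c; rewrite sum3 !even_lift /= !inordK // /= => hc.
  have hd' := fun m => congr1 (fun x => dot x (v m)) hc.
  have := hd' k; have := hd' i; have := hd' j; rewrite /=.
  have e1 := negbTE hij; have e2 := negbTE hik; have e3 := negbTE hjk.
  have e4 : (j == i) = false by rewrite eq_sym.
  have e5 : (k == i) = false by rewrite eq_sym.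
  have e6 : (k == j) = false by rewrite eq_sym.
  rewrite !(dot0l, dotDl, dotNl, dotZl, dot_sv_v) // !eqxx e1 e2 e3 e4 e5 e6.
  rewrite !(mulr0, addr0, add0r, oppr0).
  have nz x : (sgn (s x))%:~R * norm2 (v x) != 0.
    by rewrite mulf_neq0 ?w_neq0 // intr_eq0; case: (s x).
  move=> hj hi hk.
  have c2 : c (inord 2) = 0 by apply/eqP; move: hk => /eqP; rewrite mulf_eq0 (negbTE (nz k)) orbF.
  have c0 : c ord0 = 0.
    by apply/eqP; move: hi; rewrite c2 mul0r addr0 => /eqP; rewrite mulf_eq0 (negbTE (nz i)) orbF.
  have c1 : c (inord 1) = 0 by apply/eqP; move: hj => /eqP; rewrite mulf_eq0 (negbTE (nz j)) orbF.
  case=> [[|[|[|//]]] p].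
  - by rewrite -c0; congr c; apply: val_inj.
  - by rewrite -c1; congr c; apply: val_inj; rewrite /= inordK.
  - by rewrite -c2; congr c; apply: val_inj; rewrite /= inordK.
apply: lat_eq => l.
  rewrite even_lift; case: ifP => _; first exact: lat_v_sv.
  case: ifP => _; first exact: lat_v_sv.
  by apply: latB; exact: lat_v_sv.
pose b := fun l => even_sb v k i j s (lift ord0 l).
have b0 : in_lattice b (sv v s i) by exact: (latgen b ord0).
have b1 : in_lattice b (sv v s j).
  by have := latgen b (inord 1); rewrite /b even_lift /= inordK.
have b2 : in_lattice b (sv v s k - sv v s i).
  by have := latgen b (inord 2); rewrite /b even_lift /= inordK.
have := cover3 hd l; case/or3P => /eqP ->; rewrite (v_sv v s); apply: latMz => //.
by rewrite -(subrK (sv v s i) (sv v s k)); apply: latD.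
Qed.

Lemma even_obtuse k i j s : distinct3 k i j -> obtuse (even_sb v k i j s).
Proof.
case=> hij hik hjk.
have e1 := negbTE hij; have e2 := negbTE hik; have e3 := negbTE hjk.
have e4 : (j == i) = false by rewrite eq_sym.
have e5 : (k == i) = false by rewrite eq_sym.
have e6 : (k == j) = false by rewrite eq_sym.
have := norm2_ge0 (v i); have := norm2_ge0 (v j); have := norm2_ge0 (v k).
move=> wk wj wi [[|[|[|[|//]]]] pn] [[|[|[|[|//]]]] pm] hnm; rewrite /conorm /even_sb /=;
  try (by exfalso; move/eqP: hnm; apply; apply: val_inj);
  rewrite !(dotDl, dotDr, dotNl, dotNr, dot_sv) // ?eqxx ?e1 ?e2 ?e3 ?e4 ?e5 ?e6; lra.
Qed.

Lemma ord3P (c : 'I_3) : [\/ c = 0, c = 1 | c = 2].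
Proof. by case: c => [[|[|[|//]]] p]; [constructor 1|constructor 2|constructor 3]; apply: val_inj. Qed.

Lemma n01 : ((0 : 'I_3) == 1) = false. Proof. by []. Qed.
Lemma n02 : ((0 : 'I_3) == 2) = false. Proof. by []. Qed.
Lemma n10 : ((1 : 'I_3) == 0) = false. Proof. by []. Qed.
Lemma n12 : ((1 : 'I_3) == 2) = false. Proof. by []. Qed.
Lemma n20 : ((2 : 'I_3) == 0) = false. Proof. by []. Qed.
Lemma n21 : ((2 : 'I_3) == 1) = false. Proof. by []. Qed.

Lemma odd_coform_ok s : exists sigma : 'S_4,
  coform (perm_conorm sigma (conorm (odd_sb v s))) = odd_coform v.
Proof.
exists 1%g; apply/matrixP => r c; rewrite !mxE /perm_conorm !perm1.
case: r => [[|[|//]] pr]; case: (ord3P c) => ->; rewrite /= /conorm.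
all: rewrite ?I4_1 ?I4_2 ?I4_3 ?odd_lift ?odd_0 ?dotNl ?opprK ?dotDl ?dot_sv // ?eqxx ?n01 ?n02 ?n10 ?n12 ?n20 ?n21.
all: rewrite ?oppr0 ?addr0 ?add0r //.
Qed.

Lemma even_coform_ok k i j s : distinct3 k i j -> exists sigma : 'S_4,
  coform (perm_conorm sigma (conorm (even_sb v k i j s))) = even_coform v k i j.
Proof.
case=> hij hik hjk.
have e1 := negbTE hij; have e2 := negbTE hik; have e3 := negbTE hjk.
have e4 : (j == i) = false by rewrite eq_sym.
have e5 : (k == i) = false by rewrite eq_sym.
have e6 : (k == j) = false by rewrite eq_sym.
exists (tperm (inord 2) (inord 3)); apply/matrixP => r c; rewrite !mxE /perm_conorm.
have d02 : (inord 2 : 'I_4) != ord0 by rewrite -val_eqE /= inordK.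
have d03 : (inord 3 : 'I_4) != ord0 by rewrite -val_eqE /= inordK.
have d12 : (inord 2 : 'I_4) != inord 1 by rewrite -val_eqE /= !inordK.
have d13 : (inord 3 : 'I_4) != inord 1 by rewrite -val_eqE /= !inordK.
case: r => [[|[|//]] pr]; case: (ord3P c) => ->; rewrite /=.
all: rewrite -?I4_1 -?I4_2 -?I4_3 ?tpermL ?tpermR ?tpermD // /conorm /even_sb /= ?inordK //=.
all: rewrite !(dotDl, dotDr, dotNl, dotNr, dot_sv) // ?eqxx ?e1 ?e2 ?e3 ?e4 ?e5 ?e6.
all: rewrite ?oppr0 ?addr0 ?add0r ?opprK ?subr0 ?sub0r ?opprK //.
all: by rewrite ?oppr0.
Qed.

Lemma same_set_of (u w : 'I_4 -> 'rV[R]_3) (f g : 'I_4 -> 'I_4) :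
  (forall n, u n = w (f n)) -> (forall n, w n = u (g n)) -> same_set u w.
Proof. by move=> hf hg x; split; case=> n ->; [exists (f n) | exists (g n)]. Qed.

Lemma same_set_trans (u w y : 'I_4 -> 'rV[R]_3) : same_set u w -> same_set w y -> same_set u y.
Proof. by move=> h1 h2 x; rewrite h1 h2. Qed.

Lemma even_swap k i j s : distinct3 k i j ->
  exists s', same_set (even_sb v k i j s) (even_sb v k j i s').
Proof.
case=> hij hik hjk.
pose s' := fun l => if l == k then ~~ s k else s l.
have sk : sv v s' k = - sv v s k by rewrite /sv /s' eqxx; case: (s k); rewrite ?opprK.
have si : sv v s' i = sv v s i by rewrite /sv /s' (negbTE hik).
have sj : sv v s' j = sv v s j by rewrite /sv /s' (negbTE hjk).
exists s'; apply: (@same_set_of _ _ (@rev_ord 4) (@rev_ord 4)) => -[[|[|[|[|//]]]] p];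
  rewrite /even_sb /= ?sk ?si ?sj; apply/rowP => c; rewrite ?mxE; ring.
Qed.

Lemma sgnE b : (sgn b)%:~R = (if b then -1 else 1 : R).
Proof. by case: b; rewrite /sgn /= ?mulrNz. Qed.



Definition tri (s : 'I_3 -> bool) : bool * bool * bool := (s 0, s 1, s 2).
Lemma hsf (s : 'I_3 -> bool) (x : 'I_3) : sfn (tri s) (val x) = s x.
Proof. by case: (ord3P x) => ->. Qed.
Lemma memT8 t : t \in T8. Proof. by case: t => [[[] []] []]. Qed.
Lemma memI4 (n : 'I_4) : (val n \in I4). Proof. by rewrite mem_iota /= ltn_ord. Qed.
Lemma memI3 m : (m \in I3) -> (m < 3)%N. Proof. by rewrite mem_iota. Qed.

Lemma odd_distinct s s' : same_set (odd_sb v s) (odd_sb v s') -> s = s'.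
Proof.
move=> h; apply: functional_extensionality => l.
have [n hn] : exists n, sv v s l = odd_sb v s' n.
  by apply/(h (sv v s l)); exists (lift ord0 l); rewrite odd_lift.
rewrite (sv_vofn v (hsf s)) (odd_vofn v (hsf s')) in hn.
have hl : ((val l).+1 \in [:: 1; 2; 3]%N) by case: (ord3P l) => ->.
have := allP (allP (allP (allP odd_dist_check_ok _ (memT8 (tri s))) _ (memT8 (tri s'))) _ hl) _ (memI4 n).
move=> /implyP H.
suff /H /eqP : all (fun m => oddrow (sfn (tri s)) (val l).+1 m == oddrow (sfn (tri s')) (val n) m) I3.
  by rewrite /= !hsf.
apply/allP => m /memI3 hm.
by apply/eqP; rewrite {1}/oddrow /=; exact: (vofn_inj hv0 horth hn hm).
Qed.

Lemma memP6 (k i j : 'I_3) : distinct3 k i j -> ((val k, val i, val j) \in P6).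
Proof. case=> h1 h2 h3; move: k i j h1 h2 h3; by do 3! case=> [[|[|[|//]]] ?]. Qed.

Lemma even_dist_at k i j s s' a : distinct3 k i j -> (a \in [:: 1; 2; 3]%N) ->
  same_set (even_sb v k i j s) (even_sb v k i j s') ->
  sfn (tri s) (eidx (val k, val i, val j) a) = sfn (tri s') (eidx (val k, val i, val j) a).
Proof.
move=> hd ha h.
have ha4 : (a < 4)%N by move: ha; rewrite !inE => /or3P [] /eqP ->.
have [n hn] : exists n, even_sb v k i j s (Ordinal ha4) = even_sb v k i j s' n.
  by apply/(h _); exists (Ordinal ha4).
rewrite (even_vofn v k i j (hsf s)) (even_vofn v k i j (hsf s')) /= in hn.
have := allP (allP (allP (allP (allP even_dist_check_ok _ (memP6 hd)) _ (memT8 (tri s))) _ (memT8 (tri s'))) _ ha) _ (memI4 n).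
move=> /implyP H.
suff /H /eqP : all (fun m => evenrow (val k) (val i) (val j) (sfn (tri s)) a m ==
    evenrow (val k) (val i) (val j) (sfn (tri s')) (val n) m) I3 by [].
apply/allP => m /memI3 hm.
by apply/eqP; exact: (vofn_inj hv0 horth hn hm).
Qed.

Lemma even_distinct k i j s s' : distinct3 k i j ->
  same_set (even_sb v k i j s) (even_sb v k i j s') -> s = s'.
Proof.
move=> hd h; apply: functional_extensionality => l.
have h1 := even_dist_at (a := 1) hd (erefl _) h.
have h2 := even_dist_at (a := 2) hd (erefl _) h.
have h3 := even_dist_at (a := 3) hd (erefl _) h.
rewrite /eidx /= !hsf in h1 h2 h3.
by case/or3P: (cover3 hd l) => /eqP ->.
Qed.

Definition refl (m : 'I_3) (x : 'rV[R]_3) := x - ((2 * dot x (v m)) / norm2 (v m)) *: v m.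

Lemma reflD m x y : refl m (x + y) = refl m x + refl m y.
Proof. rewrite /refl dotDl; apply/rowP => c; rewrite !mxE; ring. Qed.
Lemma reflN m x : refl m (- x) = - refl m x.
Proof. rewrite /refl dotNl; apply/rowP => c; rewrite !mxE; ring. Qed.
Lemma reflMz m x n : refl m (x *~ n) = refl m x *~ n.
Proof. rewrite -!scaler_int /refl dotZl; apply/rowP => c; rewrite !mxE; ring. Qed.
Lemma refl_v m l : refl m (v l) = if l == m then - v l else v l.
Proof.
rewrite /refl; case: eqP => [->|/eqP h]; last by rewrite horth // mulr0 mul0r scale0r subr0.
have w := w_neq0 hv0 m; rewrite -/(norm2 (v m)) mulfK //.
by apply/rowP => c; rewrite !mxE; ring.
Qed.
Lemma norm2_refl m x : norm2 (refl m x) = norm2 x.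
Proof.
have w := w_neq0 hv0 m.
rewrite /refl /norm2 !(dotDl, dotDr, dotNl, dotNr, dotZl, dotZr) -/(norm2 (v m)) (dotC (v m) x).
by field.
Qed.

Definition isoG (m : 'I_3) (b : bool) (x : 'rV[R]_3) := if b then refl m x else x.
Lemma isoGD m b x y : isoG m b (x + y) = isoG m b x + isoG m b y.
Proof. by case: b; rewrite /isoG ?reflD. Qed.
Lemma isoGN m b x : isoG m b (- x) = - isoG m b x.
Proof. by case: b; rewrite /isoG ?reflN. Qed.
Lemma isoGMz m b x n : isoG m b (x *~ n) = isoG m b x *~ n.
Proof. by case: b; rewrite /isoG ?reflMz. Qed.
Lemma isoG_v m b l : isoG m b (v l) = if b && (l == m) then - v l else v l.
Proof. by case: b; rewrite /isoG ?refl_v. Qed.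
Lemma isoG_iso m b : isometry0 (isoG m b).
Proof.
case: b; rewrite /isoG; last by [].
split; first by rewrite /refl dot0l mulr0 mul0r scale0r subr0.
by move=> x y; rewrite -reflN -reflD norm2_refl.
Qed.
Lemma iso_comp (f g : 'rV[R]_3 -> 'rV[R]_3) : isometry0 f -> isometry0 g -> isometry0 (f \o g).
Proof. by move=> [f0 hf] [g0 hg]; split; [rewrite /= g0 f0 | move=> x y; rewrite /= hf hg]. Qed.

Definition isoF (s s' : 'I_3 -> bool) :=
  isoG 0 (s 0 != s' 0) \o isoG 1 (s 1 != s' 1) \o isoG 2 (s 2 != s' 2).
Lemma isoF_iso s s' : isometry0 (isoF s s').
Proof. by apply: iso_comp; [apply: iso_comp|]; apply: isoG_iso. Qed.
Lemma isoFD s s' x y : isoF s s' (x + y) = isoF s s' x + isoF s s' y.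
Proof. by rewrite /isoF /= !isoGD. Qed.
Lemma isoFN s s' x : isoF s s' (- x) = - isoF s s' x.
Proof. by rewrite /isoF /= !isoGN. Qed.
Lemma isoFB s s' x y : isoF s s' (x - y) = isoF s s' x - isoF s s' y.
Proof. by rewrite isoFD isoFN. Qed.
Lemma isoFMz s s' x n : isoF s s' (x *~ n) = isoF s s' x *~ n.
Proof. by rewrite /isoF /= !isoGMz. Qed.
Lemma isoF_v s s' l : isoF s s' (v l) = if s l != s' l then - v l else v l.
Proof.
rewrite /isoF /=; case: (ord3P l) => ->;
move: (s 0 != s' 0) (s 1 != s' 1) (s 2 != s' 2) => [] [] [];
rewrite /isoG ?reflN ?refl_v ?reflN ?refl_v ?reflN ?refl_v ?eqxx ?n01 ?n02 ?n10 ?n12 ?n20 ?n21 ?opprK //.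
Qed.
Lemma isoF_sv s s' l : isoF s s' (sv v s l) = sv v s' l.
Proof.
rewrite !sv_mulz isoFMz isoF_v.
by move: (s l) (s' l) => [] []; rewrite /= ?mulrNz ?mulNrz ?opprK.
Qed.

Lemma odd_iso s s' : isometric (odd_sb v s) (odd_sb v s').
Proof.
exists (isoF s s'); split; first exact: isoF_iso.
have E n : isoF s s' (odd_sb v s n) = odd_sb v s' n.
  case: (unliftP ord0 n) => [l|] ->; first by rewrite !odd_lift isoF_sv.
  by rewrite !odd_0 isoFN !isoFD !isoF_sv.
by apply: (@same_set_of _ _ id id) => n; rewrite E.
Qed.

Lemma even_iso_same k i j s s' :
  same_set (fun n => isoF s s' (even_sb v k i j s n)) (even_sb v k i j s').
Proof.
apply: (@same_set_of _ _ id id) => n; rewrite /even_sb /=;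
  by repeat case: ifP => _; rewrite ?isoFB ?isoFN ?isoF_sv.
Qed.

Lemma same_set_sym (u w : 'I_4 -> 'rV[R]_3) : same_set u w -> same_set w u.
Proof. by move=> h x; rewrite h. Qed.

Lemma even_iso k i j s i' j' s' : distinct3 k i j -> distinct3 k i' j' ->
  isometric (even_sb v k i j s) (even_sb v k i' j' s').
Proof.
move=> hd hd'; have [hij hik hjk] := hd; have [hij' hik' hjk'] := hd'.
have [[ei ej]|[ei ej]] : (i' = i /\ j' = j) \/ (i' = j /\ j' = i).
  case/or3P: (cover3 hd i') => /eqP ei; first by rewrite ei eqxx in hik'.
    left; split => //; case/or3P: (cover3 hd j') => /eqP ej //; first by rewrite ej eqxx in hjk'.
    by rewrite ei ej eqxx in hij'.
  right; split => //; case/or3P: (cover3 hd j') => /eqP ej //; first by rewrite ej eqxx in hjk'.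
  by rewrite ei ej eqxx in hij'.
- subst; exists (isoF s s'); split; [exact: isoF_iso | exact: even_iso_same].
- subst; have [s1 hs1] := even_swap s' hd'.
  exists (isoF s s1); split; first exact: isoF_iso.
  apply: same_set_trans (even_iso_same _ _ _ _ _) _.
  exact: same_set_sym.
Qed.
End P2.


Lemma kk (k T : int) : -1 <= T <= 1 -> 0 <= k * (k - T).
Proof.
move=> /andP [h1 h2].
have [hk|hk] : k <= -1 \/ 0 <= k by lia.
- by apply: mulr_le0 => //; lia.
- have [->|hT] : k = 0 \/ 1 <= k by lia.
    by rewrite mul0r.
  by apply: mulr_ge0 => //; lia.
Qed.

Lemma kkR (R : realFieldType) (k T : int) : -1 <= T <= 1 -> 0 <= (k%:~R : R) * (k%:~R - T%:~R).
Proof. by move=> h; rewrite -intrB -intrM ler0z; apply: kk. Qed.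

Lemma core_alg (R : realFieldType) (g00 g01 g02 g11 g12 g22 : R) (p0 p1 p2 q0 q1 q2 : int) :
 g01 <= 0 -> g02 <= 0 -> g12 <= 0 -> 0 <= g00 + g01 + g02 -> 0 <= g01 + g11 + g12 ->
 0 <= g02 + g12 + g22 ->
 -1 <= p0 <= 1 -> -1 <= p1 <= 1 -> -1 <= p2 <= 1 -> -1 <= p0 - p1 <= 1 -> -1 <= p0 - p2 <= 1 ->
 -1 <= p1 - p2 <= 1 ->
 (p0%:~R : R) * (q0%:~R * g00 + q1%:~R * g01 + q2%:~R * g02)
 + p1%:~R * (q0%:~R * g01 + q1%:~R * g11 + q2%:~R * g12)
 + p2%:~R * (q0%:~R * g02 + q1%:~R * g12 + q2%:~R * g22)
 <= q0%:~R * (q0%:~R * g00 + q1%:~R * g01 + q2%:~R * g02)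
 + q1%:~R * (q0%:~R * g01 + q1%:~R * g11 + q2%:~R * g12)
 + q2%:~R * (q0%:~R * g02 + q1%:~R * g12 + q2%:~R * g22).
Proof.
move=> h01 h02 h12 s0 s1 s2 hp0 hp1 hp2 hp01 hp02 hp12.
have k01 := kkR R (q0 - q1) hp01; have k02 := kkR R (q0 - q2) hp02.
have k12 := kkR R (q1 - q2) hp12.
have k0 := kkR R q0 hp0; have k1 := kkR R q1 hp1; have k2 := kkR R q2 hp2.
rewrite !intrB in k01 k02 k12.
have n01 : 0 <= - g01 by rewrite oppr_ge0.
have n02 : 0 <= - g02 by rewrite oppr_ge0.
have n12 : 0 <= - g12 by rewrite oppr_ge0.
have m01 := mulr_ge0 n01 k01.
have m02 := mulr_ge0 n02 k02.
have m12 := mulr_ge0 n12 k12.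
have m0 := mulr_ge0 s0 k0; have m1 := mulr_ge0 s1 k1; have m2 := mulr_ge0 s2 k2.
move: (p0%:~R) (p1%:~R) (p2%:~R) (q0%:~R) (q1%:~R) (q2%:~R) m01 m02 m12 m0 m1 m2 => P0 P1 P2 Q0 Q1 Q2 *.
lra.
Qed.

Lemma sum3c (V : zmodType) (F : 'I_3 -> V) : \sum_(i < 3) F i = F 0 + F 1 + F 2.
Proof. by rewrite !big_ord_recl big_ord0 addr0 addrA; congr (F _ + F _ + F _); apply: val_inj. Qed.

Lemma voronoi (R : realType) (u : 'I_4 -> 'rV[R]_3) (t0 t1 t2 t3 : int) (y : 'rV[R]_3)
  (q : 'I_3 -> int) :
  obtuse u -> u ord0 = - (u (lift ord0 0) + u (lift ord0 1) + u (lift ord0 2)) ->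
  0 <= t0 <= 1 -> 0 <= t1 <= 1 -> 0 <= t2 <= 1 -> 0 <= t3 <= 1 ->
  y = \sum_(l < 3) u (lift ord0 l) *~ q l ->
  t0%:~R * dot (u ord0) y + t1%:~R * dot (u (lift ord0 0)) y + t2%:~R * dot (u (lift ord0 1)) y
    + t3%:~R * dot (u (lift ord0 2)) y <= norm2 y.
Proof.
move=> hob hu0 ht0 ht1 ht2 ht3 hy.
set U0 := u (lift ord0 0); set U1 := u (lift ord0 1); set U2 := u (lift ord0 2).
have hDa : forall a : 'I_3, dot (u (lift ord0 a)) y =
   (q 0)%:~R * dot (u (lift ord0 a)) U0 + (q 1)%:~R * dot (u (lift ord0 a)) U1
   + (q 2)%:~R * dot (u (lift ord0 a)) U2.
  by move=> a; rewrite hy dot_sumr sum3c !dotMzr.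
have hN : norm2 y = (q 0)%:~R * dot U0 y + (q 1)%:~R * dot U1 y + (q 2)%:~R * dot U2 y.
  by rewrite /norm2 {1}hy dot_suml sum3c !dotMzl.
have h0 : dot (u ord0) y = - (dot U0 y + dot U1 y + dot U2 y) by rewrite hu0 dotNl !dotDl.
have ob a b : a != b -> dot (u a) (u b) <= 0.
  by move=> hab; have := hob a b hab; rewrite /conorm oppr_ge0.
have g01 : dot U0 U1 <= 0 by apply: ob.
have g02 : dot U0 U2 <= 0 by apply: ob.
have g12 : dot U1 U2 <= 0 by apply: ob.
have ob0 a : 0 <= dot U0 (u (lift ord0 a)) + dot U1 (u (lift ord0 a)) + dot U2 (u (lift ord0 a)).
  by have := hob ord0 (lift ord0 a) (neq_lift _ _); rewrite /conorm hu0 dotNl opprK !dotDl.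
have s0 := ob0 0; have s1 := ob0 1; have s2 := ob0 2.
rewrite -/U0 -/U1 -/U2 in s0 s1 s2.
rewrite hN h0 (hDa 0) (hDa 1) (hDa 2) -/U0 -/U1 -/U2.
rewrite ?(dotC U1 U0) ?(dotC U2 U0) ?(dotC U2 U1) in s0 s1 s2 *.
have hb1 : -1 <= t1 - t0 <= 1 by lia.
have hb2 : -1 <= t2 - t0 <= 1 by lia.
have hb3 : -1 <= t3 - t0 <= 1 by lia.
have hb12 : -1 <= t1 - t0 - (t2 - t0) <= 1 by lia.
have hb13 : -1 <= t1 - t0 - (t3 - t0) <= 1 by lia.
have hb23 : -1 <= t2 - t0 - (t3 - t0) <= 1 by lia.
have := @core_alg R (dot U0 U0) (dot U0 U1) (dot U0 U2) (dot U1 U1) (dot U1 U2) (dot U2 U2)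
  (t1 - t0) (t2 - t0) (t3 - t0) (q 0) (q 1) (q 2) g01 g02 g12 s0 s1 s2 hb1 hb2 hb3 hb12 hb13 hb23.
rewrite !intrB.
move: (dot U0 U0) (dot U0 U1) (dot U0 U2) (dot U1 U1) (dot U1 U2) (dot U2 U2) => a b c d e f.
move: (t0%:~R) (t1%:~R) (t2%:~R) (t3%:~R) (q 0)%:~R (q 1)%:~R (q 2)%:~R => T0 T1 T2 T3 Q0 Q1 Q2.
clear; move=> *; lra.
Qed.

Lemma forallcolP (P : colT -> bool) : forallcol P ->
  forall a0 a1 a2 a3, a0 \in L -> a1 \in L -> a2 \in L -> a3 \in L -> P (a0, a1, a2, a3).
Proof.
move=> h a0 a1 a2 a3 h0 h1 h2 h3.
exact: (allP (allP (allP (allP h a0 h0) a1 h1) a2 h2) a3 h3).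
Qed.

Lemma inL (x : int) : -1 <= x <= 1 -> x \in L.
Proof.
move=> h; have : x = -1 \/ x = 0 \/ x = 1 by lia.
by case=> [->|[->|->]].
Qed.

Lemma P6_ok : all (fun p : nat * nat * nat => [&& p.1.1 < 3, p.1.2 < 3, p.2 < 3,
  p.1.2 != p.2 & (p.1.2 != p.1.1) && (p.2 != p.1.1)]%N) P6.
Proof. by []. Qed.

Lemma P6_ords p : p \in P6 -> exists k i j : 'I_3, distinct3 k i j /\ p = (val k, val i, val j).
Proof.
move=> hp; have /and5P [hk hi hj hij /andP [hik hjk]] := allP P6_ok p hp.
exists (inord p.1.1), (inord p.1.2), (inord p.2); rewrite /distinct3 -!val_eqE /= !inordK //.
by split => //; case: p {hp hk hi hj hij hik hjk} => [[]].
Qed.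

Section P1.
Variable R : realType.
Variable v : 'I_3 -> 'rV[R]_3.
Hypothesis hv0 : forall l, v l != 0.
Hypothesis horth : forall l m, l != m -> dot (v l) (v m) = 0.

Lemma samerows_same_set (u w : 'I_4 -> 'rV[R]_3) A B :
  (forall n : 'I_4, u n = vofn v (A (val n))) -> (forall n : 'I_4, w n = vofn v (B (val n))) ->
  samerows A B -> same_set u w.
Proof.
move=> hu hw /andP [h1 h2] x; split; case=> n ->.
- have /hasP [n' hn' /allP hm] := allP h1 (val n) (memI4 n).
  have hn4 : (n' < 4)%N by move: hn'; rewrite mem_iota.
  exists (Ordinal hn4); rewrite hu hw; apply: vofn_ext => m hm3; apply/eqP; apply: hm.
  by rewrite mem_iota.
- have /hasP [n' hn' /allP hm] := allP h2 (val n) (memI4 n).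
  have hn4 : (n' < 4)%N by move: hn'; rewrite mem_iota.
  exists (Ordinal hn4); rewrite hu hw; apply: vofn_ext => m hm3; apply/eqP; apply: hm.
  by rewrite mem_iota.
Qed.

Lemma intr_mulw_inj (a b : int) m : a%:~R * norm2 (v m) = b%:~R * norm2 (v m) -> a = b.
Proof. by move/(mulIf (w_neq0 hv0 m))/eqP; rewrite eqr_int => /eqP. Qed.

Lemma part1 u : superbase_of v u -> obtuse u ->
  (exists s, same_set u (odd_sb v s)) \/
  (exists k i j s, distinct3 k i j /\ same_set u (even_sb v k i j s)).
Proof.
move=> [[hli hlat] hu0] hob.
have hu0' : u ord0 = - (u (lift ord0 0) + u (lift ord0 1) + u (lift ord0 2)).
  by rewrite hu0 I4_1 I4_2 I4_3.
pose U := fun l : 'I_3 => u (lift ord0 l).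
have hz : forall n : 'I_4, exists r : 'I_3 -> int, u n = vof v r.
  move=> n; have : in_lattice U (u n).
    case: (unliftP ord0 n) => [l|] ->; first exact: (latgen U l).
    by rewrite hu0'; apply/latN/latD; [apply/latD|]; exact: (latgen U _).
  by move/hlat => [r hr]; exists r.
have [z hzu] := fin_all_exists hz.
have hdz n m : dot (u n) (v m) = (z n m)%:~R * norm2 (v m) by rewrite hzu dot_vof_v.
have hy m : exists q : 'I_3 -> int, v m = \sum_(l < 3) u (lift ord0 l) *~ q l.
  by have /hlat [q hq] : in_lattice v (v m) := latgen v m; exists q.
pose n1 := lift ord0 (0 : 'I_3); pose n2 := lift ord0 (1 : 'I_3); pose n3 := lift ord0 (2 : 'I_3).
have hbd m (t0 t1 t2 t3 : int) : 0 <= t0 <= 1 -> 0 <= t1 <= 1 -> 0 <= t2 <= 1 -> 0 <= t3 <= 1 ->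
    -1 <= t0 * z ord0 m + t1 * z n1 m + t2 * z n2 m + t3 * z n3 m <= 1.
  move=> ht0 ht1 ht2 ht3; have [q hq] := hy m.
  have wp := w_gt0 hv0 m.
  have H1 := voronoi hob hu0' ht0 ht1 ht2 ht3 hq.
  have hq' : - v m = \sum_(l < 3) u (lift ord0 l) *~ (- q l).
    by rewrite hq -sumrN; apply: eq_bigr => l _; rewrite mulrNz.
  have H2 := voronoi hob hu0' ht0 ht1 ht2 ht3 hq'.
  rewrite !dotNr !hdz in H2; rewrite !hdz in H1.
  rewrite /norm2 dotNl dotNr opprK -/(norm2 (v m)) in H2.
  apply/andP; split; rewrite -(ler_int R) !intrD !intrM -(ler_pM2r wp);
    move: H1 H2; rewrite /n1 /n2 /n3; move: (norm2 (v m)) => w; move=> *; lra.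
pose cl (m : 'I_3) : colT := (z ord0 m, z n1 m, z n2 m, z n3 m).
have hcget m (n : 'I_4) : cget (cl m) (val n) = z n m.
  by case: (unliftP ord0 n) => [l|] ->; first case: (ord3P l) => ->.
have hsum m : z ord0 m + z n1 m + z n2 m + z n3 m = 0.
  have : dot (u ord0 + u n1 + u n2 + u n3) (v m) = 0.
    have -> : u ord0 + u n1 + u n2 + u n3 = 0.
      by rewrite hu0' -/n1 -/n2 -/n3; apply/rowP => c; rewrite !mxE; ring.
    by rewrite dot0l.
  rewrite !dotDl !hdz -!mulrDl -!intrD => /eqP; rewrite mulf_eq0 (negbTE (w_neq0 hv0 m)) orbF.
  by rewrite intr_eq0 => /eqP.
have hB01 (t : int) : t \in B01 -> 0 <= t <= 1 by rewrite !inE => /orP [] /eqP ->.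
have hvalid m : validcol (cl m).
  apply/andP; split; first by apply/eqP; apply: hsum.
  apply/allP => t0 /hB01 h0; apply/allP => t1 /hB01 h1; apply/allP => t2 /hB01 h2.
  apply/allP => t3 /hB01 h3; exact: hbd.
have hVC m : cl m \in VC.
  have := forallcolP checkVC_ok; move=> /(_ (z ord0 m) (z n1 m) (z n2 m) (z n3 m)).
  have b0 := hbd m 1 0 0 0 erefl erefl erefl erefl.
  have b1 := hbd m 0 1 0 0 erefl erefl erefl erefl.
  have b2 := hbd m 0 0 1 0 erefl erefl erefl erefl.
  have b3 := hbd m 0 0 0 1 erefl erefl erefl erefl.
  rewrite !mul0r !mul1r !add0r !addr0 in b0 b1 b2 b3.
  by move=> /(_ (inL b0) (inL b1) (inL b2) (inL b3)) /implyP; apply; apply: hvalid.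
have hD (l0 l1 l2 : int) : (forall a : 'I_3, l0 * z (lift ord0 a) 0 + l1 * z (lift ord0 a) 1
    + l2 * z (lift ord0 a) 2 = 0) -> [/\ l0 = 0, l1 = 0 & l2 = 0].
  move=> F.
  have gen (m0 : 'I_3) : l0 * ((m0 == 0) : nat)%:Z + l1 * ((m0 == 1) : nat)%:Z + l2 * ((m0 == 2) : nat)%:Z = 0.
    have [q hq] := hy m0.
    have E (m' : 'I_3) : q 0 * z n1 m' + q 1 * z n2 m' + q 2 * z n3 m' = ((m0 == m') : nat)%:Z.
      apply: (@intr_mulw_inj _ _ m').
      have H := dot_v_v horth m0 m'; rewrite {1}hq dot_suml sum3c !dotMzl !hdz in H.
      rewrite !intrD !intrM !mulrDl -!mulrA H.
      by case: eqP => [->|_]; rewrite /= ?mul1r ?mul0r.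
    have key : l0 * (q 0 * z n1 0 + q 1 * z n2 0 + q 2 * z n3 0)
        + l1 * (q 0 * z n1 1 + q 1 * z n2 1 + q 2 * z n3 1)
        + l2 * (q 0 * z n1 2 + q 1 * z n2 2 + q 2 * z n3 2)
      = q 0 * (l0 * z n1 0 + l1 * z n1 1 + l2 * z n1 2)
        + q 1 * (l0 * z n2 0 + l1 * z n2 1 + l2 * z n2 2)
        + q 2 * (l0 * z n3 0 + l1 * z n3 1 + l2 * z n3 2) by ring.
    by rewrite !E (F 0) (F 1) (F 2) !mulr0 !addr0 in key.
  have := gen 0; have := gen 1; have := gen 2.
  rewrite !eqxx n01 n02 n10 n12 n20 n21 /= !mulr0 !mulr1 !addr0 !add0r.
  by move=> -> -> ->.
have hnd : nondeg (cl 0) (cl 1) (cl 2).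
  apply/allP => l0 _; apply/allP => l1 _; apply/allP => l2 _; apply/implyP => hl.
  move: hl; apply: contraLR => /hasPn H.
  have F a : l0 * z (lift ord0 a) 0 + l1 * z (lift ord0 a) 1 + l2 * z (lift ord0 a) 2 = 0.
    by have := H (val (lift ord0 a)) (memI4 _); rewrite negbK !hcget => /eqP.
  by have [-> -> ->] := hD l0 l1 l2 F.
have hzr n : u n = vofn v (zrow (cl 0) (cl 1) (cl 2) (val n)).
  rewrite hzu /vofn /vof; apply: eq_bigr => m _; rewrite /zrow.
  by case: (ord3P m) => -> /=; rewrite hcget.
have := allP (allP (allP check_ok _ (hVC 0)) _ (hVC 1)) _ (hVC 2) => /implyP /(_ hnd).
case/orP => [/hasP [t _ ht] | /hasP [p hp /hasP [t _ ht]]].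
- left; exists (fun l : 'I_3 => sfn t (val l)).
  apply: (samerows_same_set _ _ ht) => n; first exact: hzr.
  by rewrite (@odd_vofn _ v _ (sfn t)).
- right; have [k [i [j [hd ep]]]] := P6_ords hp; rewrite ep /= in ht.
  exists k, i, j, (fun l : 'I_3 => sfn t (val l)); split => //.
  apply: (samerows_same_set _ _ ht) => n; first exact: hzr.
  by rewrite (@even_vofn _ v k i j _ (sfn t)).
Qed.
End P1.

Theorem lemma4p5 (R : realType) (v : 'I_3 -> 'rV[R]_3)
  (hv0 : forall l, v l != 0)
  (horth : forall l m, l != m -> dot (v l) (v m) = 0) :
  (* every obtuse superbase is (as a set) one of the listed ones *)
  (forall u, superbase_of v u -> obtuse u ->
     (exists s, same_set u (odd_sb v s)) \/
     (exists k i j s, distinct3 k i j /\ same_set u (even_sb v k i j s)))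
  (* the listed ones are obtuse superbases *)
  /\ (forall s, superbase_of v (odd_sb v s) /\ obtuse (odd_sb v s))
  /\ (forall k i j s, distinct3 k i j ->
        superbase_of v (even_sb v k i j s) /\ obtuse (even_sb v k i j s))
  (* class (o): 8 distinct superbases, pairwise isometric, coform *)
  /\ (forall s s', same_set (odd_sb v s) (odd_sb v s') -> s = s')
  /\ (forall s s', isometric (odd_sb v s) (odd_sb v s'))
  /\ (forall s, exists sigma : 'S_4,
        coform (perm_conorm sigma (conorm (odd_sb v s))) = odd_coform v)
  (* classes (e): for each k, 8 distinct superbases (i,j swappable),
     pairwise isometric, coform *)
  /\ (forall k i j s s', distinct3 k i j ->
        same_set (even_sb v k i j s) (even_sb v k i j s') -> s = s')
  /\ (forall k i j s, distinct3 k i j ->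
        exists s', same_set (even_sb v k i j s) (even_sb v k j i s'))
  /\ (forall k i j s i' j' s', distinct3 k i j -> distinct3 k i' j' ->
        isometric (even_sb v k i j s) (even_sb v k i' j' s'))
  /\ (forall k i j s, distinct3 k i j -> exists sigma : 'S_4,
        coform (perm_conorm sigma (conorm (even_sb v k i j s)))
          = even_coform v k i j).

Proof.
split; first exact: (part1 hv0 horth).
split; first by move=> s; split; [exact: (odd_superbase hv0 horth) | exact: (odd_obtuse horth)].
split; first by move=> k i j s hd; split; [exact: (even_superbase hv0 horth) | exact: (even_obtuse horth)].
split; first exact: (odd_distinct hv0 horth).
split; first exact: (odd_iso hv0 horth).
split; first exact: (odd_coform_ok horth).
split; first by move=> k i j s s' hd; apply: (even_distinct hv0 horth).
split; first by move=> k i j s hd; apply: even_swap.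
split; first by move=> k i j s i' j' s' hd hd'; apply: (even_iso hv0 horth).
by move=> k i j s hd; apply: (even_coform_ok horth).
Qed.
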